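(* Let $G$ be a finite, simple, connected graph and let $C$ be a cycle of length $l \geq 3$ in $G$. Let $W^+(G)$ be the graph obtained from $G$ by adding a new vertex $x$ and joining $x$ by an edge to every vertex of $C$. Then $$\chi_{dd}(G)-l \leq \chi_{dd}(W^+(G)) \leq \chi_{dd}(G) + 1.$$
   Context: All graphs are finite, undirected and simple. For a vertex $w$, $N(w)$ is its open neighborhood and $N[w]=N(w)\cup\{w\}$ its closed neighborhood. A vertex $w$ dominates a set $S$ of vertices if $S \subseteq N[w]$. A domination coloring of a graph $H$ is a proper vertex coloring of $H$ (adjacent vertices receive different colors; a color class is the set of all vertices receiving a given color) such that every vertex of $H$ dominates at least one color class (possibly its own class), and every color class is dominated by at least one vertex of $H$. The domination chromatic number $\chi_{dd}(H)$ is the minimum number of color classes in a domination coloring of $H$. *)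

(* Defs.v *)
From mathcomp Require Import all_boot.
Set Implicit Arguments. Unset Strict Implicit. Unset Printing Implicit Defensive.

Section DomColoring.
Variable T : finType.
Variable e : rel T.

Definition cnbhd (w : T) : {set T} := [set v | (v == w) || e w v].

Definition dominates (w : T) (A : {set T}) : bool := A \subset cnbhd w.

Definition independent (A : {set T}) : bool :=
  [forall u in A, forall v in A, ~~ e u v].

Definition dom_coloring (P : {set {set T}}) : bool :=
  [&& partition P [set: T],
      [forall A in P, independent A],
      [forall w, exists A in P, dominates w A] &
      [forall A in P, exists w, dominates w A]].

(* minimum number of color classes of a domination coloring; the default
   #|T| is attained by the coloring with singleton classes in a simple graph *)
Definition chi_dd : nat :=
  \big[minn/#|T|]_(P : {set {set T}} | dom_coloring P) #|P|.
End DomColoring.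

Definition simple_graph (T : finType) (e : rel T) : Prop :=
  symmetric e /\ irreflexive e.

Definition connected_graph (T : finType) (e : rel T) : Prop :=
  forall u v, connect e u v.

Definition is_graph_cycle (T : finType) (e : rel T) (c : seq T) : Prop :=
  [/\ uniq c, 3 <= size c & cycle e c].

(* W^+(G): new vertex x = None joined to every vertex of the cycle c *)
Definition wplus (T : finType) (e : rel T) (c : seq T) : rel (option T) :=
  fun a b => match a, b with
             | Some u, Some v => e u v
             | None, Some v => v \in c
             | Some u, None => u \in c
             | None, None => false
             end.

(* Main.v *)
Require Import Defs.
From mathcomp Require Import all_boot.

Set Implicit Arguments. Unset Strict Implicit. Unset Printing Implicit Defensive.

Section Aux.
Variable T : finType.

Lemma partT_intro (P : {set {set T}}) :
  set0 \notin P -> (forall x, exists2 A, A \in P & x \in A) ->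
  (forall A B x, A \in P -> B \in P -> x \in A -> x \in B -> A = B) ->
  partition P [set: T].
Proof.
move=> H0 Hc Hu; apply/and3P; split => //.
- apply/eqP/setP => x; rewrite inE; apply/bigcupP.
  by case: (Hc x) => A HA HxA; exists A.
- apply/trivIsetP => A B HA HB neq; rewrite -setI_eq0; apply/eqP/setP => y.
  rewrite !inE; apply/negbTE/negP => /andP [yA yB].
  by move/eqP: neq; apply; apply: (Hu A B y).
Qed.

Lemma partT_elim (P : {set {set T}}) : partition P [set: T] ->
  [/\ set0 \notin P, (forall x, exists2 A, A \in P & x \in A) &
  (forall A B x, A \in P -> B \in P -> x \in A -> x \in B -> A = B)].
Proof.
case/and3P => /eqP Hcov /trivIsetP Htr H0; split => //.
- move=> x; have : x \in cover P by rewrite Hcov inE.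
  by case/bigcupP => A HA HxA; exists A.
- move=> A B x HA HB xA xB; case: (eqVneq A B) => // neq.
  have := Htr A B HA HB neq; rewrite -setI_eq0 => /eqP/setP/(_ x).
  by rewrite !inE xA xB.
Qed.

Variable e : rel T.

Lemma chi_le P : dom_coloring e P -> chi_dd e <= #|P|.
Proof.
move=> HP; rewrite /chi_dd.
have : P \in index_enum {set {set T}} by rewrite mem_index_enum.
elim: (index_enum _) => // a r IH; rewrite inE big_cons.
case/orP => [/eqP <-|Hr]; first by rewrite HP geq_minl.
by case: ifP => _; [apply: leq_trans (geq_minr _ _) (IH Hr)|exact: IH].
Qed.

Lemma chi_leT : chi_dd e <= #|T|.
Proof.
rewrite /chi_dd; apply: (big_ind (fun n => n <= #|T|)) => //.
  by move=> x y Hx Hy; exact: leq_trans (geq_minl _ _) Hx.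
move=> P /and4P [HP _ _ _]; rewrite -cardsT (card_partition HP) -sum1_card.
apply: leq_sum => A HA; rewrite card_gt0; apply/negP => /eqP A0.
by case/and3P: HP => _ _; rewrite -A0 HA.
Qed.

Lemma chi_cases : chi_dd e = #|T| \/ exists2 P, dom_coloring e P & #|P| = chi_dd e.
Proof.
rewrite /chi_dd; apply: (big_ind (fun n => n = #|T| \/ exists2 P, dom_coloring e P & #|P| = n)).
- by left.
- by move=> x y Hx Hy; rewrite /minn; case: ifP.
- by move=> P HP; right; exists P.
Qed.
End Aux.

Section Constr.
Variables (T : finType) (e : rel T) (c : seq T).
Let W := wplus e c.

Lemma upper_constr P : dom_coloring e P ->
  exists2 P' : {set {set option T}}, dom_coloring W P' & #|P'| <= #|P| + 1.
Proof.
case/and4P => /partT_elim [H0 Hc Hu] /forallP Hind /forallP Hdw /forallP Hdc.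
pose P' := [set (@Some T) @: A | A : {set T} in P] :|: [set [set None]].
have memP' : forall A', A' \in P' -> (exists2 A, A \in P & A' = Some @: A) \/ A' = [set None].
  move=> A'; rewrite in_setU in_set1; case/orP => [/imsetP [A HA ->]|/eqP ->].
  - by left; exists A.
  - by right.
exists P'.
  apply/and4P; split.
  - apply: partT_intro.
    + apply/negP => /memP' [[A HA /esym /eqP]|].
      * by rewrite imset_eq0 => /eqP E; move: H0; rewrite -E HA.
      * by move/setP/(_ None); rewrite !inE.
    + case => [v|].
      * case: (Hc v) => A HA vA; exists (Some @: A); last by apply: imset_f.
        by rewrite in_setU; apply/orP; left; apply: imset_f.
      * by exists [set None]; rewrite !inE ?eqxx ?orbT.
    + move=> A' B' x /memP' [[A HA ->]|->] /memP' [[B HB ->]|->].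
      * move=> /imsetP [a aA ->] /imsetP [b bB [E]]; subst b.
        by rewrite (Hu A B a).
      * by move=> /imsetP [a aA ->]; rewrite inE.
      * by rewrite inE => /eqP -> /imsetP [].
      * by [].
  - apply/forallP => A'; apply/implyP => /memP' [[A HA ->]|->].
    + have := Hind A; rewrite HA /= => /forallP HA'.
      apply/forallP => u; apply/implyP => /imsetP [u' uA ->].
      apply/forallP => v; apply/implyP => /imsetP [v' vA ->] /=.
      by have := HA' u'; rewrite uA /= => /forallP /(_ v'); rewrite vA.
    + apply/forallP => u; apply/implyP; rewrite inE => /eqP ->.
      by apply/forallP => v; apply/implyP; rewrite inE => /eqP ->.
  - apply/forallP => -[w|].
    + have /existsP [A /andP [HA Hd]] := Hdw w.
      apply/existsP; exists (Some @: A); apply/andP; split.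
        by rewrite in_setU; apply/orP; left; apply: imset_f.
      apply/subsetP => a /imsetP [a' a'A ->].
      move/subsetP: Hd => /(_ a' a'A); rewrite /cnbhd !inE /=.
      by [].
    + apply/existsP; exists [set None]; apply/andP; split.
        by rewrite !inE eqxx orbT.
      by apply/subsetP => a; rewrite /cnbhd !inE => ->.
  - apply/forallP => A'; apply/implyP => /memP' [[A HA ->]|->].
    + have := Hdc A; rewrite HA /= => /existsP [w Hd].
      apply/existsP; exists (Some w).
      apply/subsetP => a /imsetP [a' a'A ->].
      by move/subsetP: Hd => /(_ a' a'A); rewrite /cnbhd !inE /=.
    + apply/existsP; exists None.
      by apply/subsetP => a; rewrite /cnbhd !inE => ->.
rewrite cardsU cards1 (leq_trans (leq_subr _ _)) // leq_add2r.
exact: leq_imset_card.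
Qed.

Lemma lower_constr Q : irreflexive e -> dom_coloring W Q ->
  exists2 Q' : {set {set T}}, dom_coloring e Q' & #|Q'| <= #|Q| + size c.
Proof.
move=> Hirr.
case/and4P => /partT_elim [H0 Hc Hu] /forallP Hind /forallP Hdw /forallP Hdc.
pose proj (A : {set option T}) := [set v | (Some v \in A) && (v \notin c)].
pose Q' := ([set proj A | A in Q] :\ set0) :|: [set [set v] | v in c].
have memQ' : forall A', A' \in Q' ->
   (exists2 A, A \in Q & A' = proj A /\ A' != set0) \/ (exists2 u, u \in c & A' = [set u]).
  move=> A'; rewrite in_setU in_setD1; case/orP => [/andP [n0 /imsetP [A HA E]]|/imsetP [u uc ->]].
  - by left; exists A => //; rewrite -E.
  - by right; exists u.
have projQ : forall A, A \in Q -> proj A != set0 -> proj A \in Q'.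
  by move=> A HA n0; rewrite in_setU in_setD1 n0 imset_f.
have sQ : forall u, u \in c -> [set u] \in Q'.
  by move=> u uc; rewrite in_setU (imset_f (fun v => [set v])) ?orbT.
exists Q'.
  apply/and4P; split.
  - apply: partT_intro.
    + by apply/negP => /memQ' [[A _ [-> /eqP]] //|[u _ /setP /(_ u)]]; rewrite !inE eqxx.
    + move=> v; case vc: (v \in c).
        by exists [set v]; rewrite ?sQ // inE.
      case: (Hc (Some v)) => A HA vA.
      have vp : v \in proj A by rewrite inE vA vc.
      exists (proj A) => //; apply: projQ => //.
      by apply/eqP => /setP /(_ v); rewrite vp inE.
    + move=> A' B' x /memQ' [[A HA [-> _]]|[u uc ->]] /memQ' [[B HB [-> _]]|[u' uc' ->]].
      * rewrite !inE => /andP [xA _] /andP [xB _].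
        by rewrite (Hu A B (Some x)).
      * by rewrite !inE => /andP [_ /negP xc] /eqP E; subst.
      * by rewrite !inE => /eqP E /andP [_ /negP xc]; subst.
      * by rewrite !inE => /eqP -> /eqP ->.
  - apply/forallP => A'; apply/implyP => /memQ' [[A HA [-> _]]|[u uc ->]].
    + have := Hind A; rewrite HA /= => /forallP HA'.
      apply/forallP => u; apply/implyP; rewrite inE => /andP [uA _].
      apply/forallP => v; apply/implyP; rewrite inE => /andP [vA _].
      by have := HA' (Some u); rewrite uA /= => /forallP /(_ (Some v)); rewrite vA.
    + apply/forallP => v; apply/implyP; rewrite inE => /eqP ->.
      by apply/forallP => w; apply/implyP; rewrite inE => /eqP ->; rewrite Hirr.
  - apply/forallP => w; case wc: (w \in c).
      apply/existsP; exists [set w]; rewrite sQ //=.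
      by apply/subsetP => a; rewrite /cnbhd !inE => ->.
    have /existsP [A /andP [HA Hd]] := Hdw (Some w).
    have Hd' : forall v, Some v \in A -> (v == w) || e w v.
      by move=> v vA; move/subsetP: Hd => /(_ _ vA); rewrite /cnbhd !inE.
    case: (eqVneq (proj A) set0) => [E|n0].
    + have : A != set0 by apply/negP => /eqP E'; move: H0; rewrite -E' HA.
      case/set0Pn => -[v|] vA.
      * have vc : v \in c.
          by apply/negPn/negP => vc; move/setP: E => /(_ v); rewrite !inE vA vc.
        apply/existsP; exists [set v]; rewrite sQ //=.
        by apply/subsetP => a; rewrite inE => /eqP ->; rewrite /cnbhd inE Hd'.
      * by move/subsetP: Hd => /(_ _ vA); rewrite /cnbhd !inE /= wc.
    + apply/existsP; exists (proj A); rewrite projQ //=.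
      by apply/subsetP => a; rewrite inE => /andP [aA _]; rewrite /cnbhd inE Hd'.
  - apply/forallP => A'; apply/implyP => /memQ' [[A HA [-> n0]]|[u uc ->]].
    + have := Hdc A; rewrite HA /= => /existsP [[w|] Hd].
      * apply/existsP; exists w; apply/subsetP => a; rewrite inE => /andP [aA _].
        by move/subsetP: Hd => /(_ _ aA); rewrite /cnbhd !inE.
      * case/set0Pn: n0 => v; rewrite inE => /andP [vA /negP vc].
        by move/subsetP: Hd => /(_ _ vA); rewrite /cnbhd !inE /=.
    + apply/existsP; exists u.
      by apply/subsetP => a; rewrite /cnbhd !inE => ->.
rewrite cardsU (leq_trans (leq_subr _ _)) //; apply: leq_add.
- by apply: leq_trans (subset_leq_card (subD1set _ _)) _; exact: leq_imset_card.
- exact: (leq_trans (leq_imset_card _ _) (card_size c)).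
Qed.
End Constr.

Theorem theorem6 (T : finType) (e : rel T) (c : seq T) :
  simple_graph e -> connected_graph e -> is_graph_cycle e c ->
  chi_dd e - size c <= chi_dd (wplus e c) <= chi_dd e + 1.
Proof.
move=> [_ Hirr] _ _; apply/andP; split.
- rewrite leq_subLR addnC.
  case: (chi_cases (wplus e c)) => [->|[Q HQ <-]].
    rewrite card_option; apply: leq_trans (chi_leT e) _.
    exact: leq_trans (leqnSn _) (leq_addr _ _).
  have [Q' HQ' Hc] := lower_constr Hirr HQ.
  by rewrite (leq_trans (chi_le HQ')).
- case: (chi_cases e) => [->|[P HP <-]].
    by rewrite addn1 -card_option chi_leT.
  have [P' HP' Hc] := upper_constr c HP.
  by rewrite (leq_trans (chi_le HP')).
Qed.
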